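(* There is an absolute constant $C$ such that for all integers $m\ge 2$, $n\ge2$ and every $X\in\{0,1\}^{n\times n}$, if $(a_0,\dots,a_{\phi(m)-1})$ is the representation of $\mathrm{Per}_{\zeta_m}(X)$, then $$\max_{0\le i\le\phi(m)-1}\log|a_i|\le C\,(m^2\log m+n\log n)$$ (with the convention $\log 0=-\infty$).
   Context: For $z\in\mathbb{C}$ with $|z|=1$ and $X\in\mathbb{C}^{n\times n}$, the $z$-permanent is $\mathrm{Per}_z(X)=\sum_{\sigma\in S_n} z^{\ell(\sigma)}\prod_{i=1}^n X_{i,\sigma(i)}$, where $\ell(\sigma)$ is the inversion number of $\sigma$. $\zeta_m$ is a primitive $m$-th root of unity and $\phi$ is Euler's totient function. The representation of $\alpha\in\mathbb{Z}[\zeta_m]$ is the unique tuple of integers $(a_0,\dots,a_{\phi(m)-1})$ with $\alpha=\sum_{i=0}^{\phi(m)-1}a_i\zeta_m^i$ (equivalently, the remainder upon dividing an integer polynomial representing $\alpha$ by the $m$-th cyclotomic polynomial $\Phi_m$). *)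

(* Defs.v *)
From HB Require Import structures.
From mathcomp Require Import all_boot all_order all_algebra all_fingroup all_field.
From mathcomp Require Import all_classical all_reals all_analysis.
From mathcomp Require Import Rstruct Rstruct_topology.
Set Implicit Arguments. Unset Strict Implicit. Unset Printing Implicit Defensive.
Import Order.TTheory GRing.Theory Num.Theory.
Local Open Scope ring_scope.

Definition inv_num (n : nat) (s : 'S_n) : nat :=
  #|[set p : 'I_n * 'I_n | (p.1 < p.2)%N && (s p.2 < s p.1)%N]|.

Definition zperm (R : comRingType) (n : nat) (z : R) (X : 'M[R]_n) : R :=
  \sum_(s : 'S_n) z ^+ inv_num s * \prod_(i < n) X i (s i).

(* Main.v *)
Require Import Defs.
From HB Require Import structures.
From mathcomp Require Import all_boot all_order all_algebra all_fingroup all_field.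
From mathcomp Require Import all_classical all_reals all_analysis.
From mathcomp Require Import Rstruct Rstruct_topology.
Import Order.TTheory GRing.Theory Num.Theory.
Local Open Scope ring_scope.

Lemma prod_coef_bound (I : Type) (s : seq I) (P : pred I) (F : I -> algC) :
  (forall i, `|F i| = 1) ->
  forall j, `|(\prod_(i <- s | P i) ('X - (F i)%:P))`_j| <= 2 ^+ size s.
Proof.
move=> HF; elim: s => [|x s IH] j.
  by rewrite big_nil coefC; case: (j == 0%N); rewrite ?normr1 ?normr0.
rewrite big_cons /=; case: (P x).
  rewrite mulrBl coefB coefXM mulrC coefMC exprS.
  apply: (le_trans (ler_normB _ _)); rewrite mulr_natl mulr2n normrM HF mulr1.
  apply: lerD; last exact: IH.
  case: (j == 0%N); [by rewrite normr0 exprn_ge0 | exact: IH].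
apply: (le_trans (IH j)); rewrite exprS ler_peMl ?exprn_ge0 //.
by rewrite ler1n.
Qed.
Definition rstep (phi : {poly int}) (d : nat) (c : nat -> int) : nat -> int :=
  fun i => (if i is i'.+1 then c i' else 0) - c d.-1 * phi`_i.
Definition rep phi d k := iter k (rstep phi d) (fun i => ((i == 0%N) : nat)%:Z).

Lemma rep_eq (phi : {poly int}) d (z : algC) :
  phi`_d.+1 = 1 ->
  \sum_(i < d.+2) (phi`_i)%:~R * z ^+ i = 0 ->
  forall k, \sum_(i < d.+1) (rep phi d.+1 k i)%:~R * z ^+ i = z ^+ k.
Proof.
move=> Hlead Hroot; elim=> [|k IH].
  rewrite big_ord_recl /= big1 ?addr0 ?mulr1 // => i _.
  by rewrite /rep /= mul0r.
rewrite exprS -IH mulr_sumr.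
set c := rep phi d.+1 k in IH *.
have -> : rep phi d.+1 k.+1 = rstep phi d.+1 c by [].
rewrite /rstep /=.
rewrite (big_ord_recr d.+1) /= Hlead mul1r in Hroot.
have HT : \sum_(i < d.+1) (phi`_i)%:~R * z ^+ i = - z ^+ d.+1.
  by move/eqP: Hroot; rewrite addr_eq0 => /eqP.
transitivity (\sum_(i < d.+1) ((if (i : nat) is i'.+1 then c i' else 0)%:~R * z ^+ i)
   - (c d)%:~R * \sum_(i < d.+1) (phi`_i)%:~R * z ^+ i).
  rewrite mulr_sumr -sumrB; apply: eq_bigr => i _.
  by rewrite rmorphB rmorphM /= mulrBl mulrA.
rewrite [X in _ - _ * X](_ : _ = - z ^+ d.+1); last exact: HT.
rewrite big_ord_recl /= mul0r add0r (big_ord_recr d) /=.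
rewrite mulrN opprK; congr (_ + _); last by rewrite exprS mulrCA.
by apply: eq_bigr => i _; rewrite add0n /bump leq0n add1n exprS mulrCA.
Qed.
Lemma rep_bound (phi : {poly int}) d (A : int) :
  (forall j, `|phi`_j| <= A) ->
  forall k i, `|rep phi d k i| <= (1 + A) ^+ k.
Proof.
move=> HA; have A0 : 0 <= A by apply: le_trans (HA 0%N).
elim=> [|k IH] i.
  by rewrite expr0 /rep /=; case: (i == 0%N).
rewrite exprS /rep /= -/(rep phi d k) /rstep.
apply: (le_trans (ler_normB _ _)); rewrite mulrDl mul1r normrM.
apply: lerD.
  case: i => [|i]; last exact: IH.
  by rewrite normr0 exprn_ge0 // addr_ge0.
rewrite mulrC; apply: ler_pM => //; exact: IH.
Qed.
Lemma Phi_bound m (z : algC) : m.-primitive_root z ->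
  forall j, `|('Phi_m)`_j| <= 2 ^+ m :> int.
Proof.
move=> pz j.
have H : `|(('Phi_m)`_j)%:~R : algC| <= 2 ^+ m.
  have -> : (('Phi_m)`_j)%:~R = (map_poly (fun x : int => x%:~R : algC) 'Phi_m)`_j.
    by rewrite coef_map.
  rewrite (Cintr_Cyclotomic pz) /cyclotomic.
  rewrite (_ : 2 ^+ m = 2 ^+ size (index_enum 'I_m)); last by rewrite /index_enum -enumT size_enum_ord.
  apply: prod_coef_bound => i.
  have z1 : `|z| = 1.
    apply/eqP; rewrite -(pexpr_eq1 (prim_order_gt0 pz)) ?normr_ge0 //.
    by rewrite -normrX (prim_expr_order pz) normr1.
  by rewrite normrX z1 expr1n.
by rewrite -(ler_int algC) intr_norm rmorphXn /=.
Qed.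
Lemma uniq_rep m (z : algC) : m.-primitive_root z ->
  forall u : 'I_(totient m) -> int,
  \sum_(i < totient m) (u i)%:~R * z ^+ i = 0 -> forall i, u i = 0.
Proof.
move=> pz u Hu.
set d := totient m in u Hu *.
pose c (i : nat) : rat := if insub i is Some j then (u j)%:~R else 0.
pose q := \poly_(i < d) c i.
have cE : forall j : 'I_d, c j = (u j)%:~R by move=> j; rewrite /c valK.
have szq : (size q <= d)%N by apply: size_poly.
have rq : root (map_poly ratr q) z.
  rewrite /root (horner_coef_wide _ (n := d)); last first.
    by rewrite size_map_inj_poly ?rmorph0 //; apply: fmorph_inj.
  apply/eqP; rewrite -[RHS]Hu; apply: eq_bigr => j _.
  by rewrite coef_map /= coef_poly ltn_ord cE ratr_int.
have [p [Dp _ Hp]] := minCpolyP z.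
have szp : size p = d.+1.
  rewrite -(size_map_inj_poly (@fmorph_inj _ _ (@ratr algC))) ?rmorph0 //.
  by rewrite -Dp (minCpoly_cyclotomic pz) size_cyclotomic.
have q0 : q = 0.
  apply/eqP; apply: contraT => nq.
  have pq : p %| q by rewrite -Hp.
  have := dvdp_leq nq pq; rewrite szp => H.
  by have := leq_trans H szq; rewrite ltnn.
move=> i; apply/eqP; rewrite -(intr_eq0 rat) -cE.
have := congr1 (fun r : {poly rat} => r`_i) q0.
by rewrite /= coef_poly ltn_ord coef0 => ->.
Qed.
Lemma rep_eq' m (z : algC) : m.-primitive_root z ->
  forall k, \sum_(i < totient m) (rep 'Phi_m (totient m) k i)%:~R * z ^+ i = z ^+ k.
Proof.
move=> pz.
have m0 := prim_order_gt0 pz.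
have Hsz := size_Cyclotomic m.
have Hmon := Cyclotomic_monic m.
have Hroot : root (map_poly (fun x : int => x%:~R : algC) 'Phi_m) z.
  by rewrite (Cintr_Cyclotomic pz) root_cyclotomic.
move: Hsz Hmon Hroot; case Hd: (totient m) => [|d].
  by move: (totient_gt0 m); rewrite Hd m0.
move=> Hsz Hmon Hroot; apply: rep_eq.
  by move/monicP: Hmon; rewrite lead_coefE Hsz.
move: Hroot; rewrite /root horner_coef size_map_inj_poly ?Hsz //; last exact: intr_inj.
move/eqP=> H; rewrite -[RHS]H; apply: eq_bigr => i _; by rewrite coef_map.
Qed.
Lemma prod01 n (X : 'M[algC]_n) (s : 'S_n) :
  (forall i j, X i j = 0 \/ X i j = 1) ->
  \prod_(i < n) X i (s i) = 0 \/ \prod_(i < n) X i (s i) = 1.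
Proof.
move=> HX.
apply: (big_ind (fun x : algC => x = 0 \/ x = 1)); first by right.
    by move=> x y [->|->] [->|->]; rewrite ?mul0r ?mulr0 ?mulr1; [left|left|left|right].
by move=> i _; apply: HX.
Qed.

Lemma int_bound m n (X : 'M[algC]_n) (z : algC) :
  (forall i j, X i j = 0 \/ X i j = 1) -> m.-primitive_root z ->
  forall a : 'I_(totient m) -> int,
    zperm z X = \sum_(i < totient m) (a i)%:~R * z ^+ i ->
  forall i, `|a i| <= (n`!)%:R * (1 + 2 ^+ m) ^+ m.
Proof.
move=> HX pz a Ha.
have m0 := prim_order_gt0 pz.
pose b (s : 'S_n) : int := if \prod_(i < n) X i (s i) == 0 then 0 else 1.
have bE : forall s : 'S_n, \prod_(i < n) X i (s i) = (b s)%:~R.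
  by move=> s; rewrite /b; case: (prod01 _ X s HX) => ->; rewrite ?eqxx ?oner_eq0.
pose phi := 'Phi_m.
pose r (i : nat) : int := \sum_(s : 'S_n) b s * rep phi (totient m) (inv_num s %% m) i.
have Hz : zperm z X = \sum_(i < totient m) (r i)%:~R * z ^+ i.
  rewrite (_ : zperm z X = \sum_(s : 'S_n) z ^+ inv_num s * \prod_(i < n) X i (s i)) //.
  transitivity (\sum_(s : 'S_n) (b s)%:~R *
     \sum_(i < totient m) (rep phi (totient m) (inv_num s %% m) i)%:~R * z ^+ i).
    apply: eq_bigr => s _; rewrite (rep_eq' _ _ pz) (prim_expr_mod pz) bE mulrC //.
  under eq_bigr => s _ do rewrite mulr_sumr.
  rewrite exchange_big /=; apply: eq_bigr => i _.
  rewrite /r /= rmorph_sum /= mulr_suml.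
  under eq_bigr => s _ do rewrite mulrA -rmorphM.
  by [].
have ar : forall i, a i = r i.
  move=> i; apply/eqP; rewrite -subr_eq0; apply/eqP; move: i.
  apply: (uniq_rep _ _ pz) => /=.
  have -> : \sum_(i < totient m) ((a i - r i)%:~R * z ^+ i) =
     \sum_(i < totient m) (a i)%:~R * z ^+ i - \sum_(i < totient m) (r i)%:~R * z ^+ i.
    by rewrite -sumrB; apply: eq_bigr => i _; rewrite rmorphB /= mulrBl.
  by rewrite -Ha -Hz subrr.
move=> i; rewrite ar /r.
apply: (le_trans (ler_norm_sum _ _ _)).
rewrite -card_Sn -sumr_const.
rewrite mulr_suml; apply: ler_sum => s _; rewrite normrM.
apply: ler_pM => //.
  by rewrite /b; case: ifP.
apply: (le_trans (rep_bound _ _ _ (Phi_bound _ _ pz) _ _)).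
apply: ler_weXn2l; first by rewrite lerDl exprn_ge0.
by apply/ltnW/ltn_pmod.
Qed.
From mathcomp Require Import zify ring lra.
Lemma fact_le_exp n : (n`! <= n ^ n)%N.
Proof.
elim: n => [//|n IH]; rewrite factS expnS leq_mul2l /=.
apply: (leq_trans IH); case: n {IH} => [//|n].
by rewrite leq_exp2r.
Qed.

Lemma nat_bound m n : (2 <= m)%N -> (n`! * (1 + 2 ^ m) ^ m <= n ^ n * m ^ (2 * m ^ 2))%N.
Proof.
move=> m2; apply: leq_mul; first exact: fact_le_exp.
have m0 : (0 < m)%N by apply: leq_trans m2.
apply: (@leq_trans ((2 ^ m.+1) ^ m)).
  rewrite leq_exp2r // expnS; have := expn_gt0 2 m; set t := (2 ^ m)%N; lia.
rewrite -expnM; apply: (@leq_trans (2 ^ (2 * m ^ 2))).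
  by apply: leq_pexp2l => //; nia.
rewrite leq_exp2r //; nia.
Qed.
Theorem mainTheorem7 :
  exists C : Rdefinitions.R,
  forall (m n : nat), (2 <= m)%N -> (2 <= n)%N ->
  forall X : 'M[algC]_n, (forall i j, X i j = 0 \/ X i j = 1) ->
  forall z : algC, m.-primitive_root z ->
  forall a : 'I_(totient m) -> int,
    zperm z X = \sum_(i < totient m) (a i)%:~R * z ^+ i ->
  forall i : 'I_(totient m), a i != 0 ->
    ln `|(a i)%:~R : Rdefinitions.R|
      <= C * ((m ^ 2)%:R * ln (m%:R) + n%:R * ln (n%:R)).
Proof.
exists 2 => m n m2 n2 X HX z pz a Ha i ai0.
have Hi := int_bound m n X z HX pz a Ha i.
set N := (n ^ n * m ^ (2 * m ^ 2))%N.
have HN : `|a i| <= N%:R :> int.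
apply: (le_trans Hi).
  rewrite (_ : (n`!)%:R * (1 + 2 ^+ m) ^+ m = ((n`! * (1 + 2 ^ m) ^ m)%N)%:R :> int); last first.
by rewrite natrM natrX natrD natrX.
by rewrite ler_nat; apply: nat_bound.
have HR : `|(a i)%:~R : Rdefinitions.R| <= N%:R.
by rewrite -intr_norm -[N%:R](rmorph_nat (intr : int -> Rdefinitions.R)) ler_int.
have Hpos : 0 < `|(a i)%:~R : Rdefinitions.R|.
by rewrite normr_gt0 intr_eq0.
have n0 : (0 < n%:R :> Rdefinitions.R) by rewrite ltr0n; apply: leq_trans n2.
have m0 : (0 < m%:R :> Rdefinitions.R) by rewrite ltr0n; apply: leq_trans m2.
have HlnN : ln (N%:R : Rdefinitions.R) = ln (n%:R) *+ n + ln (m%:R) *+ (2 * m ^ 2).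
rewrite /N natrM !natrX lnM ?lnXn // posrE exprn_gt0 //.
apply: (le_trans (_ : _ <= ln (N%:R : Rdefinitions.R))).
rewrite ler_ln // posrE; exact: lt_le_trans HR.
rewrite HlnN -[ln n%:R *+ n]mulr_natr -[ln m%:R *+ _]mulr_natr natrM natrX.
have lnn : 0 <= ln (n%:R : Rdefinitions.R) by rewrite ln_ge0 // ler1n; apply: leq_trans n2.
have lnm : 0 <= ln (m%:R : Rdefinitions.R) by rewrite ln_ge0 // ler1n; apply: leq_trans m2.
have := mulr_ge0 lnn (ltW n0).
nra.
Qed.
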